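(* Let $P$ be a finite poset of dimension $2$ such that no strong copy of $P$ in a two-dimensional grid $[k]\times[l]$ contains two neighboring points. Then for all $k,l\ge1$, $sat^*([k]\times[l],P)\ge\max\{k,l\}$.
   Context: $[k]\times[l]$ is ordered coordinatewise. Two points of $[k]\times[l]$ are neighboring if they agree in one coordinate and differ by exactly $1$ in the other. The dimension of a poset $P$ is the least $d$ such that there are $d$ linear orders $\pi_1,\dots,\pi_d$ of $P$ with $p<_Pq$ iff $\pi_i(p)<\pi_i(q)$ for all $i$. A strong copy of $P$ in a poset $R$ is the image of an injection $i:P\to R$ with $p\le_P p'\iff i(p)\le_R i(p')$. A subset $F\subseteq Q$ is strong $P$-saturated if $F$ contains no strong copy of $P$ but for every $x\in Q\setminus F$, $F\cup\{x\}$ contains a strong copy of $P$; $sat^*(Q,P)$ is the minimum size of a strong $P$-saturated subset of $Q$. *)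

(* Defs.v *)
From mathcomp Require Import all_boot all_order.
Set Implicit Arguments. Unset Strict Implicit. Unset Printing Implicit Defensive.

(* Dimension: [realizer P d] says there are d linear orders pi_1..pi_d of P
   (each given as an injective ranking P -> nat) such that
   p <_P q iff pi_i(p) < pi_i(q) for all i. *)
Definition realizer (disp : Order.disp_t) (P : finPOrderType disp) (d : nat) : Prop :=
  exists pi : 'I_d -> P -> nat,
    (forall i, injective (pi i)) /\
    (forall p q : P, (p < q)%O <-> (forall i, pi i p < pi i q)).

Definition poset_dim_eq (disp : Order.disp_t) (P : finPOrderType disp) (d : nat) : Prop :=
  realizer P d /\ (forall m, m < d -> ~ realizer P m).

(* The grid [k] x [l], with [k] represented by 'I_k = {0,..,k-1}. *)
Definition grid (k l : nat) := ('I_k * 'I_l)%type.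

Definition grid_le (k l : nat) (a b : grid k l) : bool :=
  (a.1 <= b.1) && (a.2 <= b.2).

Definition neighbors (k l : nat) (a b : grid k l) : bool :=
  ((nat_of_ord a.1 == b.1) && ((a.2.+1 == b.2) || (b.2.+1 == a.2)))
  || ((nat_of_ord a.2 == b.2) && ((a.1.+1 == b.1) || (b.1.+1 == a.1))).

Definition strong_embedding (disp : Order.disp_t) (P : finPOrderType disp) (k l : nat)
  (f : P -> grid k l) : bool :=
  injectiveb f && [forall p, forall q, (p <= q)%O == grid_le (f p) (f q)].

Definition contains_strong_copy (disp : Order.disp_t) (P : finPOrderType disp) (k l : nat)
  (F : {set grid k l}) : bool :=
  [exists f : {ffun P -> grid k l}, strong_embedding f && [forall p, f p \in F]].

Definition strong_saturated (disp : Order.disp_t) (P : finPOrderType disp) (k l : nat)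
  (F : {set grid k l}) : bool :=
  ~~ contains_strong_copy P F &&
  [forall x, (x \notin F) ==> contains_strong_copy P (x |: F)].

(* sat^*([k]x[l], P): minimum size of a strong P-saturated subset
   (a saturated set always exists, so the default k*l = |Q| is never the
   only candidate; it is also an upper bound for any subset). *)
Definition sat_star (disp : Order.disp_t) (P : finPOrderType disp) (k l : nat) : nat :=
  \big[minn/(k * l)]_(F : {set grid k l} | strong_saturated P F) #|F|.

(* Main.v *)
Require Import Defs.
From mathcomp Require Import all_boot all_order.
From mathcomp Require Import zify.
Set Implicit Arguments. Unset Strict Implicit. Unset Printing Implicit Defensive.

Lemma grid_eq k l (a b : grid k l) :
  nat_of_ord a.1 = b.1 -> nat_of_ord a.2 = b.2 -> a = b.
Proof. by case: a b => [? ?] [? ?] /= /val_inj -> /val_inj ->. Qed.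

Lemma core disp (P : finPOrderType disp) k l (F : {set grid k l}) (x z : grid k l) :
  (forall f : P -> grid k l, strong_embedding f -> forall p q, ~~ neighbors (f p) (f q)) ->
  ~~ contains_strong_copy P F -> z \in F -> neighbors x z ->
  (forall w, w \in F -> w != z -> grid_le x w = grid_le z w /\ grid_le w x = grid_le w z) ->
  ~~ contains_strong_copy P (x |: F).
Proof.
move=> Hnb nF zF nxz Hw; apply/negP => /existsP [f /andP [se /forallP inF]].
case: (pickP (fun p => f p == x)) => [p0 /eqP fp0 | nox].
- have nz q : f q != z.
    apply/eqP => fq; have := Hnb _ se p0 q; by rewrite fp0 fq nxz.
  have inF' p : f p != x -> f p \in F.
    by move=> fpx; have := inF p; rewrite in_setU1 (negbTE fpx).
  move/andP: se => [/injectiveP injf /forallP ord].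
  set g := [ffun p => if f p == x then z else f p].
  have gle p q : grid_le (g p) (g q) = grid_le (f p) (f q).
    rewrite !ffunE; case: eqP => [fpx|fpx]; case: eqP => [fqx|fqx].
    - by rewrite fpx fqx /grid_le !leqnn.
    - rewrite fpx; have [-> _] := Hw (f q) (inF' q (introN eqP fqx)) (nz q); by [].
    - rewrite fqx; have [_ ->] := Hw (f p) (inF' p (introN eqP fpx)) (nz p); by [].
    - by [].
  apply: (negP nF); apply/existsP; exists g; apply/andP; split.
    apply/andP; split.
      apply/injectiveP => p q; rewrite !ffunE.
      case: eqP => [fpx|fpx]; case: eqP => [fqx|fqx].
      + by move=> _; apply: injf; rewrite fpx fqx.
      + by move=> zq; move: (nz q); rewrite -zq eqxx.
      + by move=> zp; move: (nz p); rewrite zp eqxx.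
      + exact: injf.
    apply/forallP => p; apply/forallP => q; rewrite gle.
    by have /forallP := ord p; apply.
  apply/forallP => p; rewrite ffunE; case: eqP => [_|fpx] //.
  exact: inF' (introN eqP fpx).
- apply: (negP nF); apply/existsP; exists f; rewrite se /=.
  apply/forallP => p; have := inF p; by rewrite in_setU1 nox.
Qed.

Lemma step (Q : nat -> bool) a n : Q a -> ~~ Q (a + n) ->
  exists j, [/\ a <= j, j < a + n & Q j && ~~ Q j.+1].
Proof.
elim: n => [|n IH] Qa; first by rewrite addn0 Qa.
rewrite addnS => nQ; case: (boolP (Q (a + n))) => Qn.
  by exists (a + n); rewrite leq_addr ltnSn Qn nQ.
have [j [h1 h2 h3]] := IH Qa Qn; exists j; split => //; exact: ltnW.
Qed.


Lemma hlp1 (c j b d : nat) : c != j -> (j <= c) && (b <= d) = (j.+1 <= c) && (b <= d).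
Proof. by move=> H; rewrite (leq_eqVlt j c) eq_sym (negbTE H). Qed.
Lemma hlp2 (c j b d : nat) : c != j.+1 -> (c <= j) && (d <= b) = (c <= j.+1) && (d <= b).
Proof. by move=> H; rewrite (leq_eqVlt c j.+1) (negbTE H) ltnS. Qed.

Lemma col_cover disp (P : finPOrderType disp) k l (F : {set grid k l}) :
  (forall f : P -> grid k l, strong_embedding f -> forall p q, ~~ neighbors (f p) (f q)) ->
  0 < l -> (exists p q : P, p != q) -> strong_saturated P F ->
  forall i : 'I_k, exists2 y, y \in F & y.1 == i.
Proof.
move=> Hnb l0 [p1 [q1 pq1]] /andP [nF /forallP sat] i.
case: (boolP [exists y in F, y.1 == i]) => [/exists_inP [y ? ?]|none]; first by exists y.
exfalso.
pose nonemp c := [exists y in F, nat_of_ord y.1 == c].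
have emp_i : ~~ nonemp i.
  apply/exists_inP => -[w wF /eqP wi]; move/exists_inP: none; apply; exists w => //.
  by apply/eqP/val_inj.
have getx (j : nat) (jk : j < k) (z : grid k l) :
   ~~ nonemp j -> z \in F -> neighbors (Ordinal jk, z.2) z ->
  (forall w, w \in F -> w != z -> grid_le (Ordinal jk, z.2) w = grid_le z w /\
                                  grid_le w (Ordinal jk, z.2) = grid_le w z) -> False.
  move=> ej zF nxz Hw.
  have xF : (Ordinal jk, z.2) \notin F.
    apply/negP => xF; move/negP: ej; apply; apply/exists_inP; by exists (Ordinal jk, z.2).
  have := sat (Ordinal jk, z.2); rewrite xF /= => C.
  by move: (core Hnb nF zF nxz Hw); rewrite C.
case: (set_0Vmem F) => [F0 | [y yF]].
  have := sat (i, Ordinal l0); rewrite F0 in_set0 /= setU0.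
  move=> /existsP [f /andP [/andP [/injectiveP injf _] /forallP inF]].
  move: pq1; rewrite (injf p1 q1) ?eqxx //.
  by move: (inF p1) (inF q1); rewrite !in_set1 => /eqP -> /eqP ->.
have ne_y : nonemp y.1 by apply/exists_inP; exists y.
case: (ltngtP y.1 i) => [lt|gt|eq]; last first.
- by move: emp_i; rewrite -eq ne_y.
-
  have e1 : i + (y.1 - i) = y.1 by rewrite subnKC // ltnW.
  have ne2 : ~~ ~~ nonemp (i + (y.1 - i)) by rewrite e1 negbK.
  have [j [_ _ /andP [ej nej]]] := @step (fun c => ~~ nonemp c) i (y.1 - i) emp_i ne2.
  move: nej; rewrite negbK => nej.
  move: (nej) => /exists_inP [w wF /eqP wj].
  have jk : j < k by have := ltn_ord w.1; rewrite wj; exact: ltnW.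
  pose A := [pred u : grid k l | (u \in F) && (nat_of_ord u.1 == j.+1)].
  have Aw : A w by rewrite /A /= wF wj eqxx.
  case: (arg_minnP (fun u : grid k l => nat_of_ord u.2) Aw) => z /andP [zF /eqP zj] zmin.
  apply: (getx j jk z ej zF).
    by rewrite /neighbors /= eqxx zj eqxx /= orbT.
  move=> u uF uz; rewrite /grid_le /=.
  have uj : nat_of_ord u.1 != j.
    apply/eqP => uj; move/negP: ej; apply; apply/exists_inP; exists u => //; exact/eqP.
  split.
    by rewrite zj; exact: hlp1 _ _ uj.
  case: (boolP (nat_of_ord u.1 == j.+1)) => [/eqP u1|u1].
    have zu : nat_of_ord z.2 <= u.2 by apply: zmin; rewrite /A inE uF u1 eqxx.
    rewrite u1 zj ltnn ltnSn /=.
    apply/esym/negP => uz2; move/negP: uz; apply; apply/eqP; apply: grid_eq.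
      by rewrite u1 zj.
    by apply/eqP; rewrite eqn_leq uz2 zu.
  by rewrite zj; exact: hlp2 _ _ u1.
-
  have e1 : y.1 + (i - y.1) = i by rewrite subnKC // ltnW.
  have ne2 : ~~ nonemp (y.1 + (i - y.1)) by rewrite e1.
  have [j [_ ji /andP [nej ej]]] := @step nonemp y.1 (i - y.1) ne_y ne2.
  move: ji; rewrite e1 => ji.
  have jk : j.+1 < k by apply: leq_ltn_trans ji (ltn_ord i).
  move: (nej) => /exists_inP [w wF /eqP wj].
  pose A := [pred u : grid k l | (u \in F) && (nat_of_ord u.1 == j)].
  have Aw : A w by rewrite /A /= wF wj eqxx.
  case: (arg_maxnP (fun u : grid k l => nat_of_ord u.2) Aw) => z /andP [zF /eqP zj] zmax.
  apply: (getx j.+1 jk z ej zF).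
    by rewrite /neighbors /= eqxx zj eqxx /= !orbT.
  move=> u uF uz; rewrite /grid_le /=.
  have uj : nat_of_ord u.1 != j.+1.
    apply/eqP => uj; move/negP: ej; apply; apply/exists_inP; exists u => //; exact/eqP.
  split; last first.
    by rewrite zj; exact/esym/(hlp2 _ _ uj).
  case: (boolP (nat_of_ord u.1 == j)) => [/eqP u1|u1].
    have zu : nat_of_ord u.2 <= z.2 by apply: zmax; rewrite /A inE uF u1 eqxx.
    rewrite ?u1 ?zj ?ltnn ?leqnn /=.
    apply/esym/negP => uz2; move/negP: uz; apply; apply/eqP; apply: grid_eq.
      by rewrite u1 zj.
    by apply/eqP; rewrite eqn_leq uz2 zu.
  by rewrite zj; exact/esym/(hlp1 _ _ u1).
Qed.

Definition swapg k l (y : grid k l) : grid l k := (y.2, y.1).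

Lemma swapgK k l : cancel (@swapg k l) (@swapg l k).
Proof. by case. Qed.

Lemma map_copy disp (P : finPOrderType disp) k l (G : {set grid k l}) (H : {set grid l k}) :
  contains_strong_copy P G -> (forall y, y \in G -> swapg y \in H) ->
  contains_strong_copy P H.
Proof.
move=> /existsP [f /andP [/andP [/injectiveP injf /forallP ord] /forallP inG]] GH.
apply/existsP; exists [ffun p => swapg (f p)]; apply/andP; split.
  apply/andP; split.
    apply/injectiveP => p q; rewrite !ffunE => /(can_inj (@swapgK k l)); exact: injf.
  apply/forallP => p; apply/forallP => q; rewrite !ffunE /grid_le /= andbC.
  by have /forallP := ord p; apply.
by apply/forallP => p; rewrite ffunE; apply: GH.
Qed.

Lemma swap_sat disp (P : finPOrderType disp) k l (F : {set grid k l}) :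
  strong_saturated P F -> strong_saturated P [set swapg y | y in F].
Proof.
move=> /andP [nF /forallP sat]; apply/andP; split.
  apply/negP => C; move/negP: nF; apply; apply: (map_copy C).
  by move=> y /imsetP [y' y'F ->]; rewrite swapgK.
apply/forallP => x; apply/implyP => xF.
have xF' : swapg x \notin F.
  by apply/negP => C; move/negP: xF; apply; apply/imsetP; exists (swapg x); rewrite ?swapgK.
have := sat (swapg x); rewrite xF' /= => C; apply: (map_copy C).
move=> y; rewrite in_setU1 => /orP [/eqP ->|yF]; first by rewrite swapgK setU11.
by rewrite in_setU1 orbC; apply/orP; left; apply/imsetP; exists y.
Qed.

Lemma card_ge_k disp (P : finPOrderType disp) k l (F : {set grid k l}) :
  (forall (k l : nat) (f : P -> grid k l), strong_embedding f ->
     forall p q : P, ~~ neighbors (f p) (f q)) ->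
  0 < l -> (exists p q : P, p != q) -> strong_saturated P F -> k <= #|F|.
Proof.
move=> Hnb l0 two sat.
have cov := col_cover (Hnb k l) l0 two sat.
apply: leq_trans (leq_imset_card (fun y : grid k l => y.1) F).
rewrite -{1}(card_ord k) -cardsT; apply: subset_leq_card; apply/subsetP => i _.
have [y yF /eqP yi] := cov i; apply/imsetP; by exists y.
Qed.

Theorem theorem1p10 (disp : Order.disp_t) (P : finPOrderType disp) :
  poset_dim_eq P 2 ->
  (forall (k l : nat) (f : P -> grid k l), strong_embedding f ->
     forall p q : P, ~~ neighbors (f p) (f q)) ->
  forall k l : nat, 1 <= k -> 1 <= l -> maxn k l <= sat_star P k l.
Proof.
move=> [_ nr] Hnb k l k0 l0.
have two : exists p q : P, p != q.
  case: (boolP [exists p : P, exists q : P, p != q]) => [/existsP [p /existsP [q pq]]|none].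
    by exists p, q.
  exfalso; apply: (nr 1 isT); exists (fun _ _ => 0); split.
    move=> i p q _; apply/eqP; apply/negPn/negP => pq; move/negP: none; apply.
    by apply/existsP; exists p; apply/existsP; exists q.
  move=> p q; split; last by move=> /(_ ord0).
  have -> : p = q.
    apply/eqP; apply/negPn/negP => pq; move/negP: none; apply.
    by apply/existsP; exists p; apply/existsP; exists q.
  by rewrite Order.POrderTheory.ltxx.
rewrite /sat_star; elim/big_ind: _.
- by rewrite geq_max leq_pmulr // leq_pmull.
- by move=> a b Ha Hb; rewrite leq_min Ha Hb.
move=> F sat; rewrite geq_max; apply/andP; split.
  exact: card_ge_k Hnb l0 two sat.
rewrite -(card_imset _ (can_inj (@swapgK k l))).
exact: card_ge_k Hnb k0 two (swap_sat sat).
Qed.
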